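(* Assume that $d_k^2 < 2p_{k+1}$ for every $k\geq 1$. Then for every integer $N\geq 1$ there is a prime $p$ with $N^2 < p < (N+1)^2$.
   Context: $p_k$ denotes the $k$th prime ($p_1=2$) and $d_k := p_{k+1}-p_k$. *)

(* Defs.v *)
From mathcomp Require Import all_boot.
Set Implicit Arguments. Unset Strict Implicit. Unset Printing Implicit Defensive.

Lemma next_prime_ex (n : nat) : exists q, (n < q) && prime q.
Proof. case: (prime_above n) => q Hq Pq; exists q; by rewrite Hq Pq. Qed.

Definition next_prime (n : nat) : nat := ex_minn (next_prime_ex n).

(* nth_prime k = p_k, with p_1 = 2 (1-indexed); nth_prime 0 is junk (= 2). *)
Fixpoint nth_prime (k : nat) : nat :=
  match k with
  | 0 | 1 => 2
  | k'.+1 => next_prime (nth_prime k')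
  end.

Definition prime_gap (k : nat) : nat := nth_prime k.+1 - nth_prime k.

(* Main.v *)
Require Import Defs.
From mathcomp Require Import all_boot.
From mathcomp Require Import zify.

Lemma np_spec n : (n < next_prime n) && prime (next_prime n).
Proof. rewrite /next_prime; by case: ex_minnP. Qed.

Lemma nthS k : 1 <= k -> nth_prime k.+1 = next_prime (nth_prime k).
Proof. by case: k. Qed.

Lemma bracket m : 2 <= m -> exists k, [/\ 1 <= k, nth_prime k <= m & m < nth_prime k.+1].
Proof.
elim: m => // m IH.
rewrite leq_eqVlt => /orP [/eqP <-|Hm].
  exists 1; split => //=.
  by case/andP: (np_spec 2).
have [k [Hk H1 H2]] := IH Hm.
move: H2; rewrite leq_eqVlt => /orP [/eqP E|H2].
- exists k.+1; split => //; first by rewrite E.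
  rewrite E (@nthS k.+1) //; by case/andP: (np_spec (nth_prime k.+1)).
- exists k; split => //; lia.
Qed.

Theorem theorem2p3 :
  (forall k : nat, 1 <= k -> (prime_gap k) ^ 2 < 2 * nth_prime k.+1) ->
  forall N : nat, 1 <= N ->
    exists p : nat, [/\ prime p, N ^ 2 < p & p < N.+1 ^ 2].
Proof.
move=> Hgap N HN.
case: N HN => // [[|N]] _.
  by exists 2.
have [k [Hk H1 H2]] := bracket (N.+2 ^ 2) (ltac:(rewrite expnS; lia)).
have Pq : prime (nth_prime k.+1).
  rewrite nthS //; by case/andP: (np_spec (nth_prime k)).
exists (nth_prime k.+1); split => //.
case: (ltnP (nth_prime k.+1) (N.+3 ^ 2)) => // Hge.
exfalso.
have := Hgap k Hk; rewrite /prime_gap.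
move: H1 H2 Hge.
set q := nth_prime k.+1; set p := nth_prime k.
move=> H1 H2 Hge.
set d := q - p.
have Hd : q - N.+2 ^ 2 <= d by rewrite /d; lia.
have Ha : 2 * N.+2 + 1 <= q - N.+2 ^ 2 by move: Hge; rewrite !expnS !expn0; lia.
have Hsq : (q - N.+2 ^ 2) ^ 2 <= d ^ 2 by rewrite leq_exp2r.
move: Hsq Ha Hd; rewrite !expnS !expn0 !muln1.
set a := q - _.
have -> : q = a + N.+2 * N.+2 by rewrite /a; move: H2; rewrite !expnS expn0; lia.
move=> Hsq Ha _; nia.
Qed.
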